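(* Let $q(y,z|x)$ be a broadcast channel with finite alphabets such that $q(y|x)>0$ and $q(z|x)>0$ for all $x,y,z$. Fix $\lambda\in[0,1]$ and let $p(u,v,w,x)$ (finite alphabets) be a joint distribution with $H(X|U,V,W)=0$ that maximizes $$\lambda I(W;Y)+(1-\lambda)I(W;Z)+I(U;Y|W)+I(V;Z|W)-I(U;V|W)$$ over all finite-alphabet $p(u,v,w,x)$, where $(U,V,W,X,Y,Z)\sim p(u,v,w,x)q(y,z|x)$. If $(u,v,w)$ is such that $p(u,w)>0$ and $p(v,w)>0$, then $p(u,v,w)>0$, and $p(u,w,y)>0$ and $p(v,w,z)>0$ for all $y\in\mathcal Y$, $z\in\mathcal Z$.
   Context: A two-receiver discrete memoryless broadcast channel has finite input alphabet $\mathcal X$, finite output alphabets $\mathcal Y,\mathcal Z$ and transition law $q(y,z|x)$. *)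

(* Defs.v *)
From mathcomp Require Import all_boot all_order all_algebra.
From mathcomp Require Import reals exp.
Set Implicit Arguments. Unset Strict Implicit. Unset Printing Implicit Defensive.
Import Order.TTheory GRing.Theory Num.Theory.
Local Open Scope ring_scope.

Section Info.
Variable R : realType.

Definition pmf (T : finType) (P : T -> R) : Prop :=
  (forall t, 0 <= P t) /\ \sum_(t : T) P t = 1.

Definition bc_channel (X Y Z : finType) (q : X -> Y -> Z -> R) : Prop :=
  forall x, pmf (fun yz : Y * Z => q x yz.1 yz.2).

Definition pushf (T A : finType) (P : T -> R) (f : T -> A) (a : A) : R :=
  \sum_(t | f t == a) P t.

(* Shannon entropy (natural log; ln 0 = 0, so 0 ln 0 = 0) *)
Definition entropy (T A : finType) (P : T -> R) (f : T -> A) : R :=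
  - \sum_(a : A) pushf P f a * ln (pushf P f a).

Definition cond_entropy (T A B : finType) (P : T -> R) (f : T -> A) (g : T -> B) : R :=
  entropy P (fun t => (f t, g t)) - entropy P g.

Definition mutinf (T A B : finType) (P : T -> R) (f : T -> A) (g : T -> B) : R :=
  entropy P f + entropy P g - entropy P (fun t => (f t, g t)).

Definition cond_mutinf (T A B C : finType) (P : T -> R)
  (f : T -> A) (g : T -> B) (h : T -> C) : R :=
  entropy P (fun t => (f t, h t)) + entropy P (fun t => (g t, h t))
  - entropy P (fun t => (f t, g t, h t)) - entropy P h.

Definition omega (U V W X Y Z : finType) : finType := ((U * V * W * X) * (Y * Z))%type.

Section RV.
Variables U V W X Y Z : finType.
Definition rvU (o : omega U V W X Y Z) : U := o.1.1.1.1.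
Definition rvV (o : omega U V W X Y Z) : V := o.1.1.1.2.
Definition rvW (o : omega U V W X Y Z) : W := o.1.1.2.
Definition rvX (o : omega U V W X Y Z) : X := o.1.2.
Definition rvY (o : omega U V W X Y Z) : Y := o.2.1.
Definition rvZ (o : omega U V W X Y Z) : Z := o.2.2.

Definition joint (p : U * V * W * X -> R) (q : X -> Y -> Z -> R)
  (o : omega U V W X Y Z) : R := p o.1 * q o.1.2 o.2.1 o.2.2.

Definition marton_obj (lam : R) (p : U * V * W * X -> R) (q : X -> Y -> Z -> R) : R :=
  let P := joint p q in
  lam * mutinf P rvW rvY + (1 - lam) * mutinf P rvW rvZ
  + cond_mutinf P rvU rvY rvW + cond_mutinf P rvV rvZ rvW
  - cond_mutinf P rvU rvV rvW.
End RV.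
End Info.

(* Main.v *)
Require Import Defs.
From mathcomp Require Import all_boot all_order all_algebra.
From mathcomp Require Import reals sequences exp.
From mathcomp Require Import ring lra.
Import Order.TTheory GRing.Theory Num.Theory.
Local Open Scope ring_scope.
Set Implicit Arguments. Unset Strict Implicit.

Section Help.

Variable R : realType.
Definition phi (x : R) := - (x * ln x).

Lemma phi0 : phi 0 = 0.
Proof. by rewrite /phi mul0r oppr0. Qed.

Lemma ln_le_sub1 (x : R) : 0 < x -> ln x <= x - 1.
Proof.
move=> x0; have := @le_ln1Dx R (x - 1).
by rewrite (addrC 1) subrK; apply; lra.
Qed.

Lemma phi_tan (m x : R) : 0 < m -> 0 <= x ->
  phi x <= phi m + (- ln m - 1) * (x - m).
Proof.
move=> m0; rewrite le_eqVlt => /orP[/eqP<-|x0].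
  rewrite phi0 /phi; lra.
have h := ln_le_sub1 (divr_gt0 m0 x0).
rewrite ln_div ?posrE // in h.
have h2 : x * (ln m - ln x) <= x * (m / x - 1) by rewrite ler_wpM2l // ltW.
have e : x * (m / x) = m by rewrite mulrC divfK // gt_eqF.
rewrite mulrBr [in X in _ <= X]mulrBr mulr1 e in h2.
rewrite /phi; nra.
Qed.

Lemma phi_conc (e a b : R) : 0 <= e <= 1 -> 0 <= a -> 0 <= b ->
  (1 - e) * phi a + e * phi b <= phi ((1 - e) * a + e * b).
Proof.
move=> /andP[e0 e1] a0 b0.
set m := (1 - e) * a + e * b.
have m0 : 0 <= m by rewrite /m; nra.
move: m0; rewrite le_eqVlt => /orP[/eqP m0|m0].
  have p1 : 0 <= (1 - e) * a by apply: mulr_ge0; lra.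
  have p2 : 0 <= e * b by apply: mulr_ge0.
  have h1 : (1 - e) * a = 0 by move: m0; rewrite /m; lra.
  have h2 : e * b = 0 by move: m0; rewrite /m; lra.
  rewrite -m0 phi0 /phi !mulrN !mulrA h1 h2 !mul0r; lra.
have ha := phi_tan m0 a0; have hb := phi_tan m0 b0.
have ha' := ler_wpM2l (_ : 0 <= 1 - e) ha; have hb' := ler_wpM2l e0 hb.
have : (1 - e) * (phi m + (- ln m - 1) * (a - m)) + e * (phi m + (- ln m - 1) * (b - m)) = phi m.
  rewrite /m; ring.
move: (ha' ltac:(lra)) hb'; lra.
Qed.

Lemma phi_ge0 (b : R) : 0 <= b <= 1 -> 0 <= phi b.
Proof.
move=> /andP[b0 b1]; rewrite /phi oppr_ge0.
have := ln_le0 b1; nra.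
Qed.

Lemma sumL1 (C : finType) (A B : C -> R) (e : R) : 0 <= e <= 1 ->
  (forall c, 0 <= A c) -> (forall c, 0 <= B c <= 1) ->
  (1 - e) * \sum_c phi (A c) <= \sum_c phi ((1 - e) * A c + e * B c).
Proof.
move=> he hA hB; rewrite mulr_sumr; apply: ler_sum => c _.
have hb := hB c; have h1 := phi_ge0 hb.
have := phi_conc he (hA c) (_ : 0 <= B c); move: hb => /andP[hb0 _].
move=> /(_ hb0); have : 0 <= e * phi (B c) by apply: mulr_ge0 => //; case/andP: he.
lra.
Qed.

Lemma sumL2 (C : finType) (A B : C -> R) (e : R) : 0 <= e <= 1 ->
  (forall c, 0 <= A c) -> (forall c, 0 <= B c) -> (forall c, 0 < B c -> 0 < A c) ->
  \sum_c phi ((1 - e) * A c + e * B c) <=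
  \sum_c phi (A c) + e * \sum_c (- ln (A c) - 1) * (B c - A c).
Proof.
move=> /andP[e0 e1] hA hB hBA; rewrite mulr_sumr -big_split /=; apply: ler_sum => c _.
have [a0|] := ltP 0 (A c).
  have hm : 0 <= (1 - e) * A c + e * B c.
    by apply: addr_ge0; apply: mulr_ge0 => //; try lra; try exact: ltW.
  have := phi_tan a0 hm.
  have -> : (1 - e) * A c + e * B c - A c = e * (B c - A c) by ring.
  lra.
move=> a0; have Ha : A c = 0 by apply/eqP; rewrite eq_le a0 hA.
have Hb : B c = 0.
  apply/eqP; rewrite eq_le hB andbT; rewrite leNgt; apply/negP => /hBA; lra.
rewrite Ha Hb !mulr0 subrr !mulr0 addr0; lra.
Qed.

Lemma sumL3 (C : finType) (A B : C -> R) (e : R) (c0 : C) : 0 <= e <= 1 ->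
  (forall c, 0 <= A c) -> A c0 = 0 -> B c0 = 1 -> (forall c, c != c0 -> B c = 0) ->
  (1 - e) * \sum_c phi (A c) + phi e <= \sum_c phi ((1 - e) * A c + e * B c).
Proof.
move=> he hA hA0 hB0 hB.
rewrite (bigD1 c0) //= [X in _ <= X](bigD1 c0) //= hA0 hB0 phi0 mulr0 mulr1 add0r.
rewrite add0r addrC lerD2r mulr_sumr; apply: ler_sum => c hc.
have := phi_conc he (hA c) (lexx 0); rewrite hB // mulr0 addr0 phi0 mulr0 addr0.
by [].
Qed.




Lemma sum_pos_ex (I : finType) (P : pred I) (F : I -> R) :
  0 < \sum_(i | P i) F i -> exists i, P i /\ 0 < F i.
Proof.
move=> h; case/boolP: [exists i, P i && (0 < F i)].
  by move=> /existsP[i /andP[Pi Fi]]; exists i.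
move=> /existsPn hn; suff: \sum_(i | P i) F i <= 0 by rewrite leNgt h.
rewrite big_mkcond /=; apply: sumr_le0 => i _; case: ifP => // Pi.
by rewrite leNgt; have := hn i; rewrite Pi.
Qed.

Lemma sum_ge_term (I : finType) (P : pred I) (F : I -> R) (i0 : I) :
  (forall i, P i -> 0 <= F i) -> P i0 -> F i0 <= \sum_(i | P i) F i.
Proof.
move=> hF Pi0; rewrite (bigD1 i0) //= lerDl; apply: sumr_ge0 => i /andP[Pi _].
exact: hF.
Qed.

Lemma mul_pos_inv (a b : R) : 0 <= a -> 0 <= b -> 0 < a * b -> 0 < a /\ 0 < b.
Proof.
move=> a0 b0 ab; split; rewrite lt_def.
- rewrite a0 andbT; apply/eqP => e; move: ab; rewrite e mul0r; lra.
- rewrite b0 andbT; apply/eqP => e; move: ab; rewrite e mulr0; lra.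
Qed.

Lemma pushf_ge0 (T A : finType) (P : T -> R) (f : T -> A) a :
  (forall t, 0 <= P t) -> 0 <= pushf P f a.
Proof. by move=> h; apply: sumr_ge0. Qed.

Lemma pushf_sum (T A : finType) (P : T -> R) (f : T -> A) :
  \sum_a pushf P f a = \sum_t P t.
Proof.
by rewrite (partition_big f xpredT) //=.
Qed.

Lemma pushf_le1 (T A : finType) (P : T -> R) (f : T -> A) a :
  pmf P -> pushf P f a <= 1.
Proof.
move=> [h0 h1]; rewrite -h1 /pushf [X in _ <= X](bigID (fun t => f t == a)) /= lerDl.
by apply: sumr_ge0.
Qed.

Variables U V W X Y Z : finType.
Variable q : X -> Y -> Z -> R.
Hypothesis Hq : bc_channel q.

Lemma q_ge0 x y z : 0 <= q x y z.
Proof. by have [h _] := Hq x; exact: (h (y, z)). Qed.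

Lemma joint_ge0 (p : U * V * W * X -> R) : (forall s, 0 <= p s) ->
  forall t, 0 <= joint p q t.
Proof. by move=> h t; rewrite /joint; apply: mulr_ge0 => //; exact: q_ge0. Qed.

Lemma joint_pmf (p : U * V * W * X -> R) : pmf p -> pmf (joint p q).
Proof.
move=> [h0 h1]; split; first exact: joint_ge0.
rewrite -h1 /omega -(pair_big xpredT xpredT (fun a b => joint p q (a, b))) /=.
apply: eq_bigr => s _; rewrite /joint /= -mulr_sumr.
by have [_ ->] := Hq s.2; rewrite mulr1.
Qed.

Lemma pushf_mix (p d : U * V * W * X -> R) (e : R) (A : finType)
  (f : omega U V W X Y Z -> A) a :
  pushf (joint (fun s => (1 - e) * p s + e * d s) q) f a =
  (1 - e) * pushf (joint p q) f a + e * pushf (joint d q) f a.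
Proof.
rewrite /pushf /joint !mulr_sumr -big_split /=; apply: eq_bigr => t _; ring.
Qed.

Lemma pos_witness (p : U * V * W * X -> R) (A : finType)
  (f : omega U V W X Y Z -> A) (s : U * V * W * X) y z :
  (forall s, 0 <= p s) -> 0 < p s -> 0 < q s.2 y z ->
  0 < pushf (joint p q) f (f (s, (y, z))).
Proof.
move=> h0 ps qs; apply: (lt_le_trans _ (@sum_ge_term _ _ _ (s, (y, z)) _ _)).
- by rewrite /joint /=; apply: mulr_gt0.
- by move=> t _; exact: joint_ge0.
- by [].
Qed.

Definition dlt (s0 : U * V * W * X) (s : U * V * W * X) : R := (s == s0)%:R.

Lemma dlt_pmf s0 : pmf (dlt s0).
Proof.
split; first by move=> s; rewrite /dlt ler0n.
rewrite (bigD1 s0) //= big1 ?addr0 /dlt ?eqxx //.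
by move=> s /negbTE ->.
Qed.

Lemma dlt_supp s0 (A : finType) (f : omega U V W X Y Z -> A) c :
  0 < pushf (joint (dlt s0) q) f c -> exists yz, f (s0, yz) = c.
Proof.
move=> /sum_pos_ex [t [/eqP ft pt]]; exists t.2.
move: pt; rewrite /joint /dlt; case: eqP => [e _|]; last by rewrite mul0r ltxx.
by rewrite -e -ft; case: t {ft e}.
Qed.



Lemma entropyE (T A : finType) (P : T -> R) (f : T -> A) :
  entropy P f = \sum_a phi (pushf P f a).
Proof. by rewrite /entropy /phi sumrN. Qed.

Section Mix.
Variable p : U * V * W * X -> R.
Hypothesis Hp : pmf p.
Variable s0 : U * V * W * X.
Variable e : R.
Hypothesis He : 0 <= e <= 1.
Let pe := fun s => (1 - e) * p s + e * dlt s0 s.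

Lemma pe_pmf : pmf pe.
Proof.
have [h0 h1] := Hp; have [d0 d1] := dlt_pmf s0; split.
  move=> s; rewrite /pe; apply: addr_ge0; apply: mulr_ge0 => //; case/andP: He => //; lra.
rewrite big_split /= -!mulr_sumr h1 d1; lra.
Qed.

Lemma ent_mix (A : finType) (f : omega U V W X Y Z -> A) :
  entropy (joint pe q) f = \sum_a phi ((1 - e) * pushf (joint p q) f a
                                      + e * pushf (joint (dlt s0) q) f a).
Proof. by rewrite entropyE; apply: eq_bigr => a _; rewrite pushf_mix. Qed.

Lemma ent_lower (A : finType) (f : omega U V W X Y Z -> A) :
  (1 - e) * entropy (joint p q) f <= entropy (joint pe q) f.
Proof.
rewrite ent_mix entropyE; apply: sumL1 => // c.
  by apply: pushf_ge0; apply: joint_ge0; case: Hp.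
rewrite pushf_ge0 ?pushf_le1 //; first exact/joint_pmf/dlt_pmf.
by apply: joint_ge0; case: (dlt_pmf s0).
Qed.

Definition Kf (A : finType) (f : omega U V W X Y Z -> A) :=
  \sum_a (- ln (pushf (joint p q) f a) - 1)
          * (pushf (joint (dlt s0) q) f a - pushf (joint p q) f a).

Lemma ent_upper (A : finType) (f : omega U V W X Y Z -> A) :
  (forall yz, 0 < pushf (joint p q) f (f (s0, yz))) ->
  entropy (joint pe q) f <= entropy (joint p q) f + e * Kf f.
Proof.
move=> hpos; rewrite ent_mix entropyE /Kf; apply: sumL2 => // c.
- by apply: pushf_ge0; apply: joint_ge0; case: Hp.
- by apply: pushf_ge0; apply: joint_ge0; case: (dlt_pmf s0).
- by move=> /dlt_supp [yz <-].
Qed.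

Lemma ent_special (A : finType) (f : omega U V W X Y Z -> A) (c0 : A) :
  (forall yz, f (s0, yz) = c0) -> pushf (joint p q) f c0 = 0 ->
  (1 - e) * entropy (joint p q) f + phi e <= entropy (joint pe q) f.
Proof.
move=> hf hA; rewrite ent_mix entropyE.
have hB : forall c, c != c0 -> pushf (joint (dlt s0) q) f c = 0.
  move=> c hc; apply/eqP; rewrite eq_le pushf_ge0 ?andbT; last first.
    by apply: joint_ge0; case: (dlt_pmf s0).
  rewrite leNgt; apply/negP => /dlt_supp [yz]; rewrite hf => e0.
  by move: hc; rewrite e0 eqxx.
apply: (sumL3 (c0 := c0)) => //.
- by move=> c; apply: pushf_ge0; apply: joint_ge0; case: Hp.
- have := pushf_sum (joint (dlt s0) q) f.
  have [_ ->] := joint_pmf (dlt_pmf s0).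
  rewrite (bigD1 c0) //= big1 ?addr0 //.
Qed.
End Mix.
End Help.

Unset Implicit Arguments.

Theorem lemma1 (R : realType) (X Y Z : finType) (q : X -> Y -> Z -> R)
  (Hq : bc_channel q)
  (HqY : forall x y, 0 < \sum_(z : Z) q x y z)
  (HqZ : forall x z, 0 < \sum_(y : Y) q x y z)
  (lam : R) (Hlam : 0 <= lam <= 1)
  (U V W : finType) (p : U * V * W * X -> R) (Hp : pmf p)
  (Hdet : cond_entropy (joint p q) (@rvX U V W X Y Z)
            (fun o => (rvU o, rvV o, rvW o)) = 0)
  (Hmax : forall (U' V' W' : finType) (p' : U' * V' * W' * X -> R),
            pmf p' -> marton_obj lam p' q <= marton_obj lam p q)
  (u : U) (v : V) (w : W)
  (Huw : 0 < pushf (joint p q) (fun o => (rvU o, rvW o)) (u, w))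
  (Hvw : 0 < pushf (joint p q) (fun o => (rvV o, rvW o)) (v, w)) :
  0 < pushf (joint p q) (fun o => (rvU o, rvV o, rvW o)) (u, v, w)
  /\ (forall y : Y, 0 < pushf (joint p q) (fun o => (rvU o, rvW o, rvY o)) (u, w, y))
  /\ (forall z : Z, 0 < pushf (joint p q) (fun o => (rvV o, rvW o, rvZ o)) (v, w, z)).
Proof.
have [p0 p1] := Hp.
move: Huw => /sum_pos_ex [t1 [/eqP ht1 hp1]]; rewrite /joint in hp1.
move: hp1 => /(mul_pos_inv (p0 _) (q_ge0 Hq _ _ _)) [ps1 _].
move: Hvw => /sum_pos_ex [t2 [/eqP ht2 hp2]]; rewrite /joint in hp2.
move: hp2 => /(mul_pos_inv (p0 _) (q_ge0 Hq _ _ _)) [ps2 _].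
have wY : forall (A : finType) (f : omega U V W X Y Z -> A) y c,
    (forall z, f (t1.1, (y, z)) = c) -> 0 < pushf (joint p q) f c.
  move=> A f y c hf; have [z [_ hz]] := sum_pos_ex (HqY t1.1.2 y).
  by rewrite -(hf z); apply: pos_witness.
have wZ : forall (A : finType) (f : omega U V W X Y Z -> A) z c,
    (forall y, f (t2.1, (y, z)) = c) -> 0 < pushf (joint p q) f c.
  move=> A f z c hf; have [y [_ hy]] := sum_pos_ex (HqZ t2.1.2 z).
  by rewrite -(hf y); apply: pos_witness.
have hUWY : forall y, 0 < pushf (joint p q) (fun o => (rvU o, rvW o, rvY o)) (u, w, y).
  by move=> y; apply: (wY _ _ y) => z; case: ht1 => <- <-.
have hVWZ : forall z, 0 < pushf (joint p q) (fun o => (rvV o, rvW o, rvZ o)) (v, w, z).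
  by move=> z; apply: (wZ _ _ z) => y; case: ht2 => <- <-.
split; last by split.
rewrite lt_def pushf_ge0 ?andbT; last exact: joint_ge0.
apply/eqP => hA0.
pose s0 := (u, v, w, t1.1.2).
have [hu1 hw1] : t1.1.1.1.1 = u /\ t1.1.1.2 = w by case: ht1.
have [hv2 hw2] : t2.1.1.1.2 = v /\ t2.1.1.2 = w by case: ht2.
have [lam0 lam1] : 0 <= lam /\ lam <= 1 by case/andP: Hlam.
have sWY : forall yz : Y * Z, 0 < pushf (joint p q) (fun o => (rvW o, rvY o)) ((fun o => (rvW o, rvY o)) (s0, yz)).
  by move=> [y z] /=; apply: (wY _ (fun o => (rvW o, rvY o)) y) => z'; rewrite /rvW /rvY /rvU /rvV /rvZ /= ?hu1 ?hw1.
have sUYW : forall yz : Y * Z, 0 < pushf (joint p q) (fun o => (rvU o, rvY o, rvW o)) ((fun o => (rvU o, rvY o, rvW o)) (s0, yz)).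
  by move=> [y z] /=; apply: (wY _ (fun o => (rvU o, rvY o, rvW o)) y) => z'; rewrite /rvW /rvY /rvU /rvV /rvZ /= ?hu1 ?hw1.
have sWZ : forall yz : Y * Z, 0 < pushf (joint p q) (fun o => (rvW o, rvZ o)) ((fun o => (rvW o, rvZ o)) (s0, yz)).
  by move=> [y z] /=; apply: (wZ _ (fun o => (rvW o, rvZ o)) z) => y'; rewrite /rvW /rvY /rvU /rvV /rvZ /= ?hv2 ?hw2.
have sVZW : forall yz : Y * Z, 0 < pushf (joint p q) (fun o => (rvV o, rvZ o, rvW o)) ((fun o => (rvV o, rvZ o, rvW o)) (s0, yz)).
  by move=> [y z] /=; apply: (wZ _ (fun o => (rvV o, rvZ o, rvW o)) z) => y'; rewrite /rvW /rvY /rvU /rvV /rvZ /= ?hv2 ?hw2.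
pose H (A : finType) (f : omega U V W X Y Z -> A) := entropy (joint p q) f.
pose K (A : finType) (f : omega U V W X Y Z -> A) := Kf q p s0 f.
pose S := lam * H _ (@rvY U V W X Y Z) + (1 - lam) * H _ (@rvZ U V W X Y Z)
  + H _ (fun o => (rvY o, rvW o)) + H _ (fun o => (rvZ o, rvW o))
  + H _ (fun o => (rvU o, rvV o, rvW o))
  + lam * K _ (fun o => (rvW o, rvY o)) + (1 - lam) * K _ (fun o => (rvW o, rvZ o))
  + K _ (fun o => (rvU o, rvY o, rvW o)) + K _ (fun o => (rvV o, rvZ o, rvW o)).
have key : forall e, 0 <= e <= 1 -> phi e <= e * S.
  move=> e He.
  have Hm := Hmax _ _ _ _ (pe_pmf Hp s0 He).
  have l1 := ler_wpM2l lam0 (ent_lower Hq Hp s0 He (@rvY U V W X Y Z)).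
  have l2 := ler_wpM2l (_ : 0 <= 1 - lam) (ent_lower Hq Hp s0 He (@rvZ U V W X Y Z)).
  have l3 := ent_lower Hq Hp s0 He (fun o => (rvY o, rvW o)).
  have l4 := ent_lower Hq Hp s0 He (fun o => (rvZ o, rvW o)).
  have l5 := ent_special Hq Hp (s0 := s0) He (c0 := (u, v, w)) (f := fun o => (rvU o, rvV o, rvW o)) (fun _ => erefl) hA0.
  have u1 := ler_wpM2l lam0 (ent_upper Hq Hp He sWY).
  have u2 := ler_wpM2l (_ : 0 <= 1 - lam) (ent_upper Hq Hp He sWZ).
  have u3 := ent_upper Hq Hp He sUYW.
  have u4 := ent_upper Hq Hp He sVZW.
  move: Hm; rewrite /marton_obj /mutinf /cond_mutinf /= => Hm.
  rewrite /S /H /K.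
  have l2' := l2 ltac:(lra); have u2' := u2 ltac:(lra).
  lra.
pose C := `|S| + 1.
have e0 : 0 < expR (- C) := expR_gt0 _.
have e1 : expR (- C) <= 1 by rewrite expR_le1 oppr_le0 /C; apply: addr_ge0.
have := key (expR (- C)) ltac:(rewrite (ltW e0) e1 //).
rewrite /phi expRK mulrN opprK ler_pM2l //.
have := ler_norm S; rewrite /C; lra.
Qed.
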